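(* Let $k \geq 3$ and $n \geq 2^{k-1}$ be integers, and let $A \subseteq \{1,2,\ldots,n\}$ be a set that contains no $k$-term geometric progression. Then \[ n - |A| \geq \left( \frac{1}{2^k -1} + \frac{2}{5}\left( \frac{1}{5^{k-1} } - \frac{1}{6^{k-1}} \right) + \frac{4}{15}\left( \frac{1}{7^{k-1} } - \frac{1}{10^{k-1}} \right) \right) n + O\left(\frac{\log n}{k} \right), \] where the implied constant in the $O$-term is absolute (independent of $n$, $k$ and $A$).
   Context: A geometric progression of length $k$ with common ratio $r$, where $r \neq 0, \pm 1$ is a real number, is a sequence $(a_0, a_1, \ldots, a_{k-1})$ of nonzero real numbers with $a_i/a_{i-1} = r$ for $i = 1, \ldots, k-1$. A $k$-term (or $k$-) geometric progression is a geometric progression of length $k$ with some common ratio $r$. A set contains no $k$-term geometric progression if it does not contain numbers $a_0, \ldots, a_{k-1}$ such that $(a_0, \ldots, a_{k-1})$ is a $k$-term geometric progression. *)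

(* Defs.v *)
From Stdlib Require Import Reals List Arith.
Import ListNotations.
Open Scope R_scope.

(* A (finite set of positive integers, given as a duplicate-free list)
   contains a k-term geometric progression: there are a nonzero real a0 and a
   real ratio r <> 0, 1, -1 such that a0 * r^i belongs to A for all i < k.
   (The terms a0 r^i are then automatically nonzero.) *)
Definition contains_kGP (k : nat) (A : list nat) : Prop :=
  exists a0 r : R,
    a0 <> 0 /\ r <> 0 /\ r <> 1 /\ r <> -1 /\
    forall i : nat, (i < k)%nat -> exists m : nat, In m A /\ INR m = a0 * r ^ i.

Definition ck (k : nat) : R :=
  1 / (2 ^ k - 1)
  + 2 / 5 * (1 / 5 ^ (k - 1) - 1 / 6 ^ (k - 1))
  + 4 / 15 * (1 / 7 ^ (k - 1) - 1 / 10 ^ (k - 1)).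

(* Main.v *)
Require Import Defs.
From Stdlib Require Import Reals List Arith Lia Lra Classical.
Import ListNotations.
Open Scope nat_scope.

Lemma divb (n d : nat) : d <> 0 -> d * (n / d) <= n /\ n < d * (n / d) + d.
Proof.
  intros Hd. pose proof (Nat.div_mod_eq n d). pose proof (Nat.mod_upper_bound n d Hd). lia.
Qed.

Lemma packing (A : list nat) (n : nat) (K : list (nat*nat)) (gp : nat*nat -> list nat) :
  NoDup A -> (forall m, In m A -> 1 <= m <= n) ->
  NoDup K ->
  (forall key, In key K -> exists e, In e (gp key) /\ ~ In e A /\ 1 <= e <= n) ->
  (forall k1 k2 e, In k1 K -> In k2 K -> In e (gp k1) -> In e (gp k2) -> k1 = k2) ->
  length K + length A <= n.
Proof.
  intros HA HAn HK Hmiss Hdisj.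
  assert (HM : exists M, NoDup M /\ length M = length K /\
            (forall e, In e M -> ~ In e A /\ 1 <= e <= n /\ exists key, In key K /\ In e (gp key))).
  { clear HA. induction K as [|key K IH].
    - exists []. split; [constructor|split; [reflexivity| intros e0 []]].
    - inversion HK; subst.
      destruct IH as [M [HM1 [HM2 HM3]]]; auto.
      + intros kk Hk. apply Hmiss. now right.
      + intros k1 k2 e0 Hk1 Hk2. apply Hdisj; now right.
      + destruct (Hmiss key (or_introl eq_refl)) as [e [He1 [He2 He3]]].
        exists (e :: M). split; [|split].
        * constructor; auto. intros HeM. destruct (HM3 e HeM) as [_ [_ [k2 [Hk2 He']]]].
          assert (key = k2) by (apply (Hdisj key k2 e); auto; [left; auto| right; auto]).
          subst. contradiction.
        * simpl. lia.
        * intros e' [<-|He'].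
          { split; [auto|split; [lia|]]. exists key; split; auto; now left. }
          destruct (HM3 e' He') as [? [? [k2 [? ?]]]]. split; [auto|split; [auto|]].
          exists k2; split; auto; now right. }
  destruct HM as [M [HM1 [HM2 HM3]]].
  assert (HND : NoDup (M ++ A)).
  { apply NoDup_app; auto. intros a Ha. now apply HM3. }
  assert (Hinc : incl (M ++ A) (seq 1 n)).
  { intros a Ha. apply in_seq. apply in_app_or in Ha as [Ha|Ha].
    - destruct (HM3 a Ha) as [_ [? _]]. lia.
    - specialize (HAn a Ha). lia. }
  pose proof (NoDup_incl_length HND Hinc). rewrite length_app, length_seq in H. lia.
Qed.

Lemma gp_missing (k c y : nat) (A : list nat) :
  ~ contains_kGP k A -> 2 <= c -> 1 <= y -> exists i, i < k /\ ~ In (c^i * y) A.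
Proof.
  intros HA Hc Hy.
  destruct (classic (exists i, i < k /\ ~ In (c^i * y) A)) as [H|H]; auto.
  exfalso. apply HA. exists (INR y), (INR c).
  assert (Hc' : (2 <= INR c)%R) by (apply (le_INR 2); lia).
  assert (Hy' : (1 <= INR y)%R) by (apply (le_INR 1); lia).
  repeat split; try lra.
  intros i Hi. destruct (in_dec Nat.eq_dec (c^i*y) A) as [Hin|Hin].
  - exists (c^i*y). split; auto. rewrite mult_INR, pow_INR. ring.
  - exfalso. apply H. eauto.
Qed.

Lemma pow2_pos (e : nat) : 1 <= 2^e.
Proof. pose proof (Nat.pow_le_mono_r 2 0 e). simpl in H. lia. Qed.

Lemma pow_pos' (c e : nat) : 1 <= c -> 1 <= c^e.
Proof. intros. induction e; simpl; nia. Qed.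

Lemma pow_mono (c a b : nat) : 1 <= c -> a <= b -> c^a <= c^b.
Proof. intros. apply Nat.pow_le_mono_r; lia. Qed.

Definition gy (k n y : nat) : Prop := exists j, 2^(j*k+k-1)*y <= n < 2^(j*k+k)*y.

Fixpoint Ylist (k f n : nat) : list nat :=
  match f with
  | 0 => []
  | S f' => seq (S (n / 2^k)) (n / 2^(k-1) - n / 2^k) ++ Ylist k f' (n / 2^k)
  end.

Lemma div_le_self (n d : nat) : 1 <= d -> n / d <= n.
Proof. intros. destruct (divb n d) as [H1 H2]; [lia|]. nia. Qed.

Lemma div_anti (n k : nat) : 1 <= k -> n / 2^k <= n / 2^(k-1).
Proof.
  intros Hk. replace k with (S (k-1)) at 1 by lia. rewrite Nat.pow_succ_r'.
  rewrite <- Nat.Div0.div_div.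
  apply Nat.div_le_mono; [pose proof (pow2_pos (k-1)); lia|]. apply div_le_self. lia.
Qed.

Lemma Ylist_prop (k : nat) : 1 <= k -> forall f n y, In y (Ylist k f n) ->
  1 <= y /\ y <= n / 2^(k-1) /\ gy k n y.
Proof.
  intros Hk f. induction f as [|f IH]; intros n y Hy; simpl in Hy; [contradiction|].
  pose proof (pow2_pos k) as Pk. pose proof (pow2_pos (k-1)) as Pk1.
  assert (E : 2^k = 2 * 2^(k-1)) by (rewrite <- Nat.pow_succ_r'; f_equal; lia).
  apply in_app_or in Hy as [Hy|Hy].
  - apply in_seq in Hy. pose proof (div_anti n k Hk).
    destruct (divb n (2^k)) as [A1 A2]; [lia|].
    destruct (divb n (2^(k-1))) as [B1 B2]; [lia|].
    split; [lia|split; [lia|]]. exists 0. replace (0*k+k-1) with (k-1) by lia.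
    replace (0*k+k) with k by lia.
    assert (Q1 : y <= n / 2^(k-1)) by lia. assert (Q2 : S (n / 2^k) <= y) by lia.
    pose proof (Nat.mul_le_mono_l _ _ (2^(k-1)) Q1).
    pose proof (Nat.mul_le_mono_l _ _ (2^k) Q2). lia.
  - destruct (IH _ _ Hy) as [H1 [H2 [j [H3 H4]]]].
    destruct (divb n (2^k)) as [A1 A2]; [lia|].
    pose proof (div_le_self (n / 2^k) (2^(k-1)) Pk1). pose proof (div_anti n k Hk).
    split; [lia|split; [lia|]]. exists (S j).
    replace (S j * k + k - 1) with (k + (j*k+k-1)) by lia.
    replace (S j * k + k) with (k + (j*k+k)) by lia.
    rewrite (Nat.pow_add_r 2 k (j*k+k-1)), (Nat.pow_add_r 2 k (j*k+k)).
    pose proof (Nat.mul_le_mono_l _ _ (2^k) H3).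
    assert (Q : S (n / 2^k) <= 2^(j*k+k)*y) by lia.
    pose proof (Nat.mul_le_mono_l _ _ (2^k) Q). rewrite <- !Nat.mul_assoc. match goal with H : 2^k * S _ <= _ |- _ => rewrite Nat.mul_succ_r in H end. lia.
Qed.

Lemma Ylist_nodup (k : nat) : 1 <= k -> forall f n, NoDup (Ylist k f n).
Proof.
  intros Hk f. induction f as [|f IH]; intros n; simpl; [constructor|].
  apply NoDup_app; auto. apply seq_NoDup.
  intros a Ha Ha'. apply in_seq in Ha. apply Ylist_prop in Ha' as [_ [H2 _]]; auto.
  pose proof (div_le_self (n / 2^k) (2^(k-1)) (pow2_pos _)). lia.
Qed.

Lemma exp_le (E E' y n : nat) : 2^E*y <= n -> n < 2^(E'+1)*y -> E <= E'.
Proof.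
  intros H1 H2. destruct (le_lt_dec E E') as [|Hlt]; auto.
  pose proof (pow_mono 2 (E'+1) E ltac:(lia) ltac:(lia)). nia.
Qed.

Lemma block_disj_aux (k n y y' i i' : nat) : 1 <= k ->
  gy k n y -> gy k n y' -> i <= i' -> i' < k -> 2^i*y = 2^i'*y' -> y = y'.
Proof.
  intros Hk [j [H1 H2]] [j' [H3 H4]] Hii Hi' Heq.
  set (d := i' - i).
  assert (Hy : y = 2^d * y').
  { replace i' with (i + d) in Heq by lia. rewrite Nat.pow_add_r in Heq.
    rewrite <- Nat.mul_assoc in Heq. apply Nat.mul_cancel_l in Heq; auto.
    pose proof (pow2_pos i). lia. }
  subst y. rewrite Nat.mul_assoc, <- Nat.pow_add_r in H1, H2.
  assert (X1 : j*k+k-1+d <= j'*k+k-1).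
  { apply (exp_le _ _ y' n); auto. replace (j'*k+k-1+1) with (j'*k+k) by lia. auto. }
  assert (X2 : j'*k+k-1 <= j*k+k-1+d).
  { apply (exp_le _ _ y' n); auto. replace (j*k+k-1+d+1) with (j*k+k+d) by lia. auto. }
  assert (d = 0).
  { destruct (le_lt_dec j' j) as [Hj|Hj].
    - pose proof (Nat.mul_le_mono_r j' j k Hj). lia.
    - pose proof (Nat.mul_le_mono_r (S j) j' k Hj). simpl in H. lia. }
  rewrite H. simpl. lia.
Qed.

Lemma block_disj (k n y y' i i' : nat) : 1 <= k ->
  gy k n y -> gy k n y' -> i < k -> i' < k -> 2^i*y = 2^i'*y' -> y = y'.
Proof.
  intros. destruct (le_lt_dec i i').
  - eapply block_disj_aux; eauto.
  - symmetry. eapply (block_disj_aux k n y' y i' i); eauto. lia.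
Qed.

Definition form6 (w : nat) : Prop := exists t, w = 6*t+1 \/ w = 6*t+5.

Lemma form6_odd w : form6 w -> Nat.odd w = true.
Proof.
  intros [t [->| ->]].
  - replace (6*t+1) with (2*(3*t)+1) by lia. apply Nat.odd_odd.
  - replace (6*t+5) with (2*(3*t+2)+1) by lia. apply Nat.odd_odd.
Qed.

Lemma odd3 i w : Nat.odd (3^i * w) = Nat.odd w.
Proof.
  induction i; [simpl; now rewrite Nat.add_0_r|].
  rewrite Nat.pow_succ_r', <- Nat.mul_assoc, Nat.odd_mul, IHi. reflexivity.
Qed.

Lemma Q_disj_aux i i' w w' : form6 w -> form6 w' -> i <= i' -> 3^i*w = 3^i'*w' -> w = w'.
Proof.
  intros Hw Hw' Hii Heq. set (d := i' - i).
  assert (Hy : w = 3^d * w').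
  { replace i' with (i + d) in Heq by lia. rewrite Nat.pow_add_r in Heq.
    rewrite <- Nat.mul_assoc in Heq. apply Nat.mul_cancel_l in Heq; auto.
    pose proof (pow_pos' 3 i). lia. }
  destruct d as [|d]. { simpl in Hy. lia. }
  simpl in Hy. destruct Hw as [t [Ht|Ht]]; lia.
Qed.

Lemma Q_disj i i' w w' : form6 w -> form6 w' -> 3^i*w = 3^i'*w' -> w = w'.
Proof.
  intros. destruct (le_lt_dec i i').
  - eapply Q_disj_aux; eauto.
  - symmetry. eapply (Q_disj_aux i' i); eauto. lia.
Qed.

Lemma BQ_disj k n y w i i' : gy k n y -> ~ gy k n (3^i'*w) -> form6 w -> 2^i*y = 3^i'*w -> False.
Proof.
  intros Hy Hw Hf Heq. destruct i as [|i].
  - simpl in Heq. rewrite Nat.add_0_r in Heq. subst. contradiction.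
  - pose proof (odd3 i' w) as O. rewrite <- Heq, (form6_odd w Hf) in O.
    rewrite Nat.pow_succ_r', <- Nat.mul_assoc, Nat.odd_even in O. discriminate.
Qed.

Definition Tlist (lo hi : nat) := seq (lo/6 + 1) (hi/6 - lo/6 - 1).
Definition Wlist (lo hi : nat) :=
  map (fun t => 6*t+1) (Tlist lo hi) ++ map (fun t => 6*t+5) (Tlist lo hi).

Lemma Wlist_prop lo hi w : In w (Wlist lo hi) -> lo < w <= hi /\ form6 w.
Proof.
  intros H. unfold Wlist, Tlist in H.
  destruct (divb lo 6) as [A1 A2]; [lia|]. destruct (divb hi 6) as [B1 B2]; [lia|].
  apply in_app_or in H as [H|H]; apply in_map_iff in H as [t [<- Ht]]; apply in_seq in Ht;
    (split; [lia| exists t; lia]).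
Qed.

Lemma Wlist_nodup lo hi : NoDup (Wlist lo hi).
Proof.
  unfold Wlist. apply NoDup_app.
  - apply NoDup_map_NoDup_ForallPairs; [intros a b _ _; lia| apply seq_NoDup].
  - apply NoDup_map_NoDup_ForallPairs; [intros a b _ _; lia| apply seq_NoDup].
  - intros a Ha Hb. apply in_map_iff in Ha as [t [<- _]]. apply in_map_iff in Hb as [t' [Hb _]]. lia.
Qed.

Lemma Wlist_length lo hi : length (Wlist lo hi) = 2 * (hi/6 - lo/6 - 1).
Proof. unfold Wlist, Tlist. rewrite length_app, !length_map, length_seq. lia. Qed.

Definition goodint (k a b : nat) := forall n w, a*w <= n -> n < b*w ->
  3^(k-1)*w <= n /\ forall i, i < k -> ~ gy k n (3^i*w).

Lemma goodint_gen k i0 : 1 <= k -> 3^(k-1) <= 2^k*3^i0 -> 3^(i0+1) <= 2^k ->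
  goodint k (2^k*3^i0) (2^(k-1)*3^(i0+1)).
Proof.
  intros Hk R1 R2 n w H1 H2. split.
  { pose proof (Nat.mul_le_mono_r _ _ w R1). lia. }
  intros i Hi [j [J1 J2]].
  pose proof (pow_pos' 3 i ltac:(lia)) as P3.
  destruct j as [|j].
  - replace (0*k+k-1) with (k-1) in J1 by lia. replace (0*k+k) with k in J2 by lia.
    destruct (le_lt_dec i i0) as [Hi0|Hi0].
    + pose proof (pow_mono 3 i i0 ltac:(lia) Hi0).
      pose proof (Nat.mul_le_mono_l _ _ (2^k) H). pose proof (Nat.mul_le_mono_r _ _ w H0). nia.
    + pose proof (pow_mono 3 (i0+1) i ltac:(lia) ltac:(lia)).
      pose proof (Nat.mul_le_mono_l _ _ (2^(k-1)) H). pose proof (Nat.mul_le_mono_r _ _ w H0). nia.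
  - assert (E : 2^(S j*k+k-1) = 2^(k-1) * 2^k * 2^(j*k)).
    { rewrite <- !Nat.pow_add_r. f_equal. lia. }
    rewrite E in J1.
    pose proof (Nat.mul_le_mono_l _ _ (2^(k-1)) R2).
    pose proof (pow_pos' 2 (j*k) ltac:(lia)).
    assert (2^(k-1)*3^(i0+1)*w <= 2^(k-1)*2^k*2^(j*k)*(3^i*w)).
    { apply Nat.mul_le_mono; [|nia]. nia. }
    lia.
Qed.

Lemma goodint_3 : goodint 3 9 12.
Proof.
  intros n w H1 H2. split; [simpl; lia|].
  intros i Hi [j [J1 J2]].
  destruct j as [|j].
  - simpl in J1, J2. destruct i as [|[|[|i]]]; simpl in *; lia.
  - assert (E : 2^(S j*3+3-1) = 32 * 2^(j*3)).
    { replace (S j*3+3-1) with (5 + j*3) by lia. rewrite Nat.pow_add_r. reflexivity. }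
    rewrite E in J1. pose proof (pow_pos' 2 (j*3) ltac:(lia)).
    pose proof (pow_pos' 3 i ltac:(lia)).
    assert (1 <= 2^(j*3) * 3^i) by nia.
    assert (w <= 2^(j*3) * 3^i * w) by nia. nia.
Qed.

Definition gpf (k : nat) (key : nat*nat) : list nat :=
  if fst key =? 0 then map (fun i => 2^i * snd key) (seq 0 k)
  else map (fun i => 3^i * snd key) (seq 0 k).

Lemma Wlist_in k n a b w : 1 <= a -> 1 <= b -> goodint k a b -> In w (Wlist (n/b) (n/a)) ->
  form6 w /\ 1 <= w /\ 3^(k-1)*w <= n /\ forall i, i < k -> ~ gy k n (3^i*w).
Proof.
  intros Ha Hb Hg Hw. apply Wlist_prop in Hw as [[W1 W2] Hf].
  destruct (divb n a) as [A1 A2]; [lia|]. destruct (divb n b) as [B1 B2]; [lia|].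
  assert (a*w <= n) by (pose proof (Nat.mul_le_mono_l _ _ a W2); lia).
  assert (n < b*w) by (assert (Q : S (n/b) <= w) by lia; pose proof (Nat.mul_le_mono_l _ _ b Q);
     rewrite Nat.mul_succ_r in H0; lia).
  destruct (Hg n w) as [G1 G2]; auto. split; auto. split; [lia|]. auto.
Qed.

Lemma main_nat k n A a b : 3 <= k -> NoDup A -> (forall m, In m A -> 1 <= m <= n) ->
  ~ contains_kGP k A -> goodint k a b -> 1 <= a -> 1 <= b ->
  length (Ylist k n n) + length (Wlist (n/b) (n/a)) + length A <= n.
Proof.
  intros Hk HA HAn Hc Hg Ha Hb.
  set (Y := Ylist k n n). set (W := Wlist (n/b) (n/a)).
  set (K := map (pair 0) Y ++ map (pair 1) W).
  assert (LK : length K = length Y + length W) by (unfold K; rewrite length_app, !length_map; auto).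
  rewrite <- LK. apply (packing A n K (gpf k)); auto.
  - unfold K. apply NoDup_app.
    + apply NoDup_map_NoDup_ForallPairs; [intros x y _ _ H; now inversion H| apply Ylist_nodup; lia].
    + apply NoDup_map_NoDup_ForallPairs; [intros x y _ _ H; now inversion H| apply Wlist_nodup].
    + intros p Hp Hp'. apply in_map_iff in Hp as [? [<- _]]. apply in_map_iff in Hp' as [? [H _]].
      discriminate.
  - intros key Hkey. unfold K in Hkey. apply in_app_or in Hkey as [H|H];
      apply in_map_iff in H as [x [<- Hx]].
    + apply Ylist_prop in Hx as [X1 [X2 X3]]; [|lia].
      destruct (gp_missing k 2 x A Hc ltac:(lia) X1) as [i [Hi Hm]].
      exists (2^i*x). unfold gpf; simpl. split; [apply in_map_iff; exists i; split; auto; apply in_seq; lia|].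
      split; auto.
      destruct (divb n (2^(k-1))) as [B1 B2]; [pose proof (pow2_pos (k-1)); lia|].
      pose proof (pow_mono 2 i (k-1) ltac:(lia) ltac:(lia)). pose proof (pow2_pos i).
      pose proof (Nat.mul_le_mono_l _ _ (2^(k-1)) X2).
      pose proof (Nat.mul_le_mono_r _ _ x H). nia.
    + destruct (Wlist_in k n a b x Ha Hb Hg Hx) as [X1 [X2 [X3 X4]]].
      destruct (gp_missing k 3 x A Hc ltac:(lia) X2) as [i [Hi Hm]].
      exists (3^i*x). unfold gpf; simpl. split; [apply in_map_iff; exists i; split; auto; apply in_seq; lia|].
      split; auto.
      pose proof (pow_mono 3 i (k-1) ltac:(lia) ltac:(lia)). pose proof (pow_pos' 3 i ltac:(lia)).
      pose proof (Nat.mul_le_mono_r _ _ x H). nia.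
  - intros k1 k2 e H1 H2 E1 E2. unfold K in H1, H2.
    apply in_app_or in H1 as [H1|H1]; apply in_map_iff in H1 as [x [<- Hx]];
    apply in_app_or in H2 as [H2|H2]; apply in_map_iff in H2 as [x' [<- Hx']];
    unfold gpf in E1, E2; simpl in E1, E2;
    apply in_map_iff in E1 as [i [Ei Hi]]; apply in_map_iff in E2 as [i' [Ei' Hi']];
    apply in_seq in Hi; apply in_seq in Hi'.
    + apply Ylist_prop in Hx as [_ [_ Gx]]; [|lia]. apply Ylist_prop in Hx' as [_ [_ Gx']]; [|lia].
      f_equal. apply (block_disj k n x x' i i'); auto; lia.
    + exfalso. apply Ylist_prop in Hx as [_ [_ Gx]]; [|lia].
      destruct (Wlist_in k n a b x' Ha Hb Hg Hx') as [X1 [X2 [X3 X4]]].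
      apply (BQ_disj k n x x' i i'); auto; [apply X4; lia| lia].
    + exfalso. apply Ylist_prop in Hx' as [_ [_ Gx]]; [|lia].
      destruct (Wlist_in k n a b x Ha Hb Hg Hx) as [X1 [X2 [X3 X4]]].
      apply (BQ_disj k n x' x i' i); auto; [apply X4; lia| lia].
    + destruct (Wlist_in k n a b x Ha Hb Hg Hx) as [X1 _].
      destruct (Wlist_in k n a b x' Ha Hb Hg Hx') as [X1' _].
      f_equal. apply (Q_disj i i' x x'); auto; lia.
Qed.

Open Scope R_scope.

Lemma ln_le' x y : 0 < x -> x <= y -> ln x <= ln y.
Proof. intros. destruct (Req_dec x y); [subst; lra|]. left. apply ln_increasing; lra. Qed.

Lemma ln0 : ln 0 = 0.
Proof. unfold ln. destruct (Rlt_dec 0 0) as [H|H]; [exfalso; apply (Rlt_irrefl 0); exact H| reflexivity]. Qed.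

Lemma INR2pow e : INR (2^e) = 2^e.
Proof. rewrite pow_INR. simpl. replace (1+1) with 2 by ring. reflexivity. Qed.

Lemma div_real (n d : nat) : (1 <= d)%nat ->
  INR d * INR (n / d) <= INR n /\ INR n < INR d * INR (n / d) + INR d.
Proof.
  intros Hd. destruct (divb n d) as [A B]; [lia|].
  split; [rewrite <- mult_INR; apply le_INR; auto|].
  rewrite <- mult_INR, <- plus_INR. apply lt_INR; auto.
Qed.

Lemma Ylist_bound k : (3 <= k)%nat -> forall f n, (n <= f)%nat ->
  INR (length (Ylist k f n)) >= INR n / (2^k - 1) - 2 - 4 * ln (INR n) / INR k.
Proof.
  intros Hk f. induction f as [|f IH]; intros n Hn.
  { assert (n = 0%nat) by lia. subst. simpl. rewrite ln0. unfold Rdiv. lra. }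
  destruct (Nat.eq_dec n 0) as [->|Hn0].
  { pose proof (pos_INR (length (Ylist k (S f) 0))). assert (E0 : INR 0 = 0) by reflexivity.
    rewrite E0, ln0. unfold Rdiv. lra. }
  simpl Ylist. rewrite length_app, length_seq, plus_INR.
  set (q := (n / 2^(k-1))%nat). set (m := (n / 2^k)%nat).
  assert (Pk : 2^k = 2 * 2^(k-1)) by (replace k with (S (k-1)) at 1 by lia; reflexivity).
  assert (P8 : 8 <= 2^k).
  { replace 8 with (2^3) by (simpl; ring). apply Rle_pow; lra || lia. }
  assert (Hm : m = (q / 2)%nat).
  { unfold m, q. rewrite Nat.Div0.div_div. f_equal. rewrite Nat.mul_comm, <- Nat.pow_succ_r'. f_equal. lia. }
  assert (Hmq : (m <= q)%nat) by (rewrite Hm; apply div_le_self; lia).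
  rewrite minus_INR by auto.
  destruct (div_real n (2^(k-1)) (pow2_pos _)) as [Q1 Q2]. fold q in Q1, Q2.
  destruct (div_real n (2^k) (pow2_pos _)) as [M1 M2]. fold m in M1, M2.
  destruct (div_real q 2 ltac:(lia)) as [H1 H2]. rewrite <- Hm in H1, H2.
  rewrite !INR2pow in Q1, Q2, M1, M2. simpl INR in H1, H2. replace (1+1) with 2 in H1, H2 by ring.
  assert (Hn1 : 1 <= INR n) by (apply (le_INR 1); lia).
  assert (lnn : 0 <= ln (INR n)) by (rewrite <- ln_1; apply ln_le'; lra).
  assert (Hk' : 3 <= INR k) by (replace 3 with (INR 3) by (simpl; ring); apply le_INR; lia).
  assert (Hdiv1 : INR n / (2^k - 1) = INR n / 2^k + INR n / (2^k * (2^k - 1))).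
  { field. lra. }
  assert (Hqm : INR q - INR m >= INR n / 2^k - 1/2).
  { assert (INR q >= INR n / 2^(k-1) - 1).
    { assert (INR n / 2^(k-1) < INR q + 1).
      { apply Rmult_lt_reg_l with (2^(k-1)); [lra|]. field_simplify; lra. }
      lra. }
    assert (INR n / 2^k = (INR n / 2^(k-1)) / 2) by (rewrite Pk; field; lra).
    lra. }
  destruct (Nat.eq_dec m 0) as [Hm0|Hm0].
  - assert (Hnl : (n < 2^k)%nat).
    { destruct (divb n (2^k)) as [_ B]; [pose proof (pow2_pos k); lia|]. fold m in B. rewrite Hm0 in B. lia. }
    apply le_INR in Hnl. rewrite INR2pow, S_INR in Hnl.
    assert (INR n / (2^k - 1) <= 1).
    { apply Rmult_le_reg_r with (2^k-1); [lra|]. field_simplify; lra. }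
    assert (4 * ln (INR n) / INR k >= 0).
    { unfold Rdiv. apply Rle_ge. apply Rmult_le_pos; [lra|]. left. apply Rinv_0_lt_compat. lra. }
    pose proof (pos_INR (length (Ylist k f m))). pose proof (le_INR _ _ Hmq). lra.
  - assert (Hmf : (m <= f)%nat).
    { assert (m < n)%nat. { unfold m. apply Nat.Div0.div_lt_upper_bound. pose proof (pow2_pos k). 
        pose proof (pow_mono 2 1 k ltac:(lia) ltac:(lia)). simpl in H0. nia. }
      lia. }
    specialize (IH m Hmf).
    assert (Hm1 : 1 <= INR m) by (apply (le_INR 1); lia).
    assert (Hlm : ln (INR m) <= ln (INR n) - INR k * ln 2).
    { rewrite <- ln_pow by lra. 
      assert (ln (INR m) <= ln (INR n / 2^k)).
      { apply ln_le'; [lra|]. apply Rmult_le_reg_l with (2^k); [lra|]. field_simplify; lra. }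
      unfold Rdiv in H. rewrite ln_mult in H; [| lra| apply Rinv_0_lt_compat; lra].
      rewrite ln_Rinv in H by lra. lra. }
    pose proof ln_lt_2.
    assert (4 * ln (INR m) / INR k <= 4 * ln (INR n) / INR k - 2).
    { apply Rmult_le_reg_r with (INR k); [lra|]. field_simplify; try lra. nra. }
    assert (INR m / (2^k-1) >= INR n / (2^k*(2^k-1)) - 1/7).
    { assert (INR m >= INR n / 2^k - 1).
      { assert (INR n / 2^k < INR m + 1).
        { apply Rmult_lt_reg_l with (2^k); [lra|]. field_simplify; lra. }
        lra. }
      assert (1/(2^k-1) <= 1/7).
      { apply Rmult_le_reg_r with (7*(2^k-1)); [nra|]. field_simplify; lra. }
      assert (INR m / (2^k-1) >= (INR n / 2^k - 1) / (2^k - 1)).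
      { unfold Rdiv. apply Rle_ge, Rmult_le_compat_r; [left; apply Rinv_0_lt_compat; lra| lra]. }
      assert ((INR n / 2^k - 1) / (2^k - 1) = INR n / (2^k*(2^k-1)) - 1/(2^k-1)) by (field; lra).
      lra. }
    lra.
Qed.

Lemma INR_sub_ge (x y : nat) : INR (x - y) >= INR x - INR y.
Proof.
  destruct (le_lt_dec y x).
  - rewrite minus_INR; auto. lra.
  - replace (x - y)%nat with 0%nat by lia. apply lt_INR in l. simpl. lra.
Qed.

Lemma Wlist_bound n a b : (1 <= a)%nat -> (1 <= b)%nat ->
  INR (length (Wlist (n/b) (n/a))) >= (INR n / INR a - INR n / INR b)/3 - 5.
Proof.
  intros Ha Hb. rewrite Wlist_length, mult_INR.
  set (hi := (n/a)%nat). set (lo := (n/b)%nat).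
  pose proof (INR_sub_ge (hi/6 - lo/6) 1). pose proof (INR_sub_ge (hi/6) (lo/6)).
  destruct (div_real n a Ha) as [A1 A2]. destruct (div_real n b Hb) as [B1 B2].
  destruct (div_real hi 6 ltac:(lia)) as [C1 C2]. destruct (div_real lo 6 ltac:(lia)) as [D1 D2].
  fold hi lo in A1, A2, B1, B2.
  assert (Ha' : 1 <= INR a) by (apply (le_INR 1); auto).
  assert (Hb' : 1 <= INR b) by (apply (le_INR 1); auto).
  assert (E6 : INR 6 = 6) by (simpl; ring). rewrite E6 in C1, C2, D1, D2.
  assert (INR n / INR a < INR hi + 1).
  { apply Rmult_lt_reg_l with (INR a); [lra|]. field_simplify; lra. }
  assert (INR lo <= INR n / INR b).
  { apply Rmult_le_reg_l with (INR b); [lra|]. field_simplify; lra. }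
  simpl (INR 2). simpl (INR 1) in H. pose proof (pos_INR (lo/6)). pose proof (pos_INR lo).
  lra.
Qed.

Open Scope nat_scope.

Lemma exists_i_aux : forall f a b, 1 <= b -> b < 3*a -> a <= b + f ->
  exists i, a <= b*3^i /\ b*3^i < 3*a.
Proof.
  induction f; intros a b Hb H1 H2.
  - exists 0. simpl. lia.
  - destruct (le_lt_dec a b). { exists 0. simpl. lia. }
    destruct (IHf a (3*b)) as [i [I1 I2]]; try lia.
    exists (S i). rewrite Nat.pow_succ_r'. lia.
Qed.

Lemma pow34 k : 4 <= k -> 3^(k+1) <= 2^k*2^k.
Proof.
  intros Hk. induction Hk. { simpl. lia. }
  replace (S m + 1) with (S (m+1)) by lia. rewrite !Nat.pow_succ_r'. nia.
Qed.

Lemma pow35 j : 6 <= j -> 18*3^j <= 5^j.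
Proof.
  intros Hj. induction Hj. { simpl. lia. }
  rewrite !Nat.pow_succ_r'. nia.
Qed.

Lemma exists_i0 k : 4 <= k -> exists i0,
  3^(k-1) <= 2^k*3^i0 /\ 2^k*3^i0 < 3^k /\ 3^(i0+1) <= 2^k.
Proof.
  intros Hk.
  assert (E : 3^k = 3*3^(k-1)) by (rewrite <- Nat.pow_succ_r'; f_equal; lia).
  assert (2^k < 3^k).
  { apply Nat.pow_lt_mono_l; lia. }
  destruct (exists_i_aux (3^(k-1)) (3^(k-1)) (2^k) (pow2_pos k)) as [i [I1 I2]]; try lia.
  exists i. split; [lia|split; [lia|]].
  pose proof (pow34 k Hk). rewrite Nat.add_1_r, Nat.pow_succ_r' in *.
  assert (2^k*(3*3^i) < 2^k*2^k) by nia.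
  apply Nat.mul_lt_mono_pos_l in H1; [lia|]. pose proof (pow2_pos k). lia.
Qed.

Open Scope R_scope.

Lemma INRpow c e : INR (c^e) = INR c ^ e.
Proof. apply pow_INR. Qed.

Lemma dens_gen k i0 : (7 <= k)%nat -> (2^k*3^i0 < 3^k)%nat ->
  ck k - 1/(2^k-1) <= (1/INR (2^k*3^i0) - 1/INR (2^(k-1)*3^(i0+1)))/3.
Proof.
  intros Hk Ha.
  assert (E3 : INR 3 = 3) by (simpl; ring). assert (E2 : INR 2 = 2) by (simpl; ring).
  rewrite !mult_INR, !INRpow, E2, E3.
  set (j := (k-1)%nat).
  assert (Hkj : k = S j) by (unfold j; lia).
  pose proof (pow35 j ltac:(unfold j; lia)) as P35.
  apply le_INR in P35. rewrite mult_INR, !INRpow, E3 in P35.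
  assert (E5 : INR 5 = 5) by (simpl; ring). rewrite E5 in P35. simpl (INR 18) in P35.
  apply lt_INR in Ha. rewrite mult_INR, !INRpow, E2, E3 in Ha.
  unfold ck. fold j. rewrite Hkj in *. rewrite Nat.add_1_r. simpl (2 ^ S j) in *. simpl (3 ^ S j) in *.
  simpl (3 ^ S i0).
  set (A := 3^i0). set (T := 3^j). set (D := 2^j).
  assert (HA : 1 <= A) by (apply pow_R1_Rle; lra).
  assert (HT : 1 <= T) by (apply pow_R1_Rle; lra).
  assert (HD : 1 <= D) by (apply pow_R1_Rle; lra).
  assert (H6 : 0 < 6^j) by (apply pow_lt; lra).
  assert (H10 : 0 < 10^j) by (apply pow_lt; lra).
  assert (H57 : 5^j <= 7^j) by (apply pow_incr; lra).
  assert (H5 : 0 < 5^j) by (apply pow_lt; lra).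
  assert (X1 : 0 <= 1/6^j) by (unfold Rdiv; rewrite Rmult_1_l; left; apply Rinv_0_lt_compat; lra).
  assert (X2 : 0 <= 1/10^j) by (unfold Rdiv; rewrite Rmult_1_l; left; apply Rinv_0_lt_compat; lra).
  assert (X3 : 1/7^j <= 1/5^j).
  { unfold Rdiv. rewrite !Rmult_1_l. apply Rinv_le_contravar; lra. }
  assert (X4 : 1/(2*D*A) - 1/(D*(3*A)) = 1/(6*D*A)) by (field; lra).
  assert (X5 : 2/3 * (1/5^j) <= 1/(18*D*A)).
  { apply Rmult_le_reg_r with (18*D*A*5^j); [repeat apply Rmult_lt_0_compat; lra|]. field_simplify; try lra. unfold D, A, T in *. lra. }
  assert (Ek : 1 / (2 * D - 1) + 2 / 5 * (1 / 5 ^ j - 1 / 6 ^ j) + 4 / 15 * (1 / 7 ^ j - 1 / 10 ^ j) -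
    1 / (2 * D - 1) <= 2/3 * (1/5^j)) by lra.
  rewrite X4. replace (1/(6*D*A)/3) with (1/(18*D*A)) by (field; lra). lra.
Qed.

Lemma ln_bound k n : (3 <= k)%nat -> (2^(k-1) <= n)%nat -> ln (INR n) / INR k >= 1/3.
Proof.
  intros Hk Hn. apply le_INR in Hn. rewrite INR2pow in Hn.
  assert (Hk' : 3 <= INR k) by (replace 3 with (INR 3) by (simpl; ring); apply le_INR; lia).
  assert (P : 0 < 2^(k-1)) by (apply pow_lt; lra).
  assert (ln (2^(k-1)) <= ln (INR n)) by (apply ln_le'; lra).
  rewrite ln_pow in H by lra. rewrite minus_INR in H by lia. simpl (INR 1) in H.
  pose proof ln_lt_2.
  assert (ln (INR n) >= (INR k - 1)/2) by nra.
  apply Rle_ge. apply Rmult_le_reg_r with (INR k); [lra|]. field_simplify; lra.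
Qed.

Lemma dens_exists k : (3 <= k)%nat -> exists a b : nat, (1 <= a)%nat /\ (1 <= b)%nat /\
  goodint k a b /\ ck k - 1/(2^k-1) <= (1/INR a - 1/INR b)/3.
Proof.
  intros Hk.
  destruct (Nat.eq_dec k 3) as [->|H3].
  { exists 9%nat, 12%nat. split; [lia|split; [lia|split; [apply goodint_3|]]].
    unfold ck. simpl. lra. }
  destruct (Nat.eq_dec k 4) as [->|H4].
  { exists (2^4*3^1)%nat, (2^(4-1)*3^(1+1))%nat. split; [simpl; lia|split; [simpl; lia|split]].
    - apply goodint_gen; simpl; lia.
    - unfold ck. simpl. lra. }
  destruct (Nat.eq_dec k 5) as [->|H5].
  { exists (2^5*3^1)%nat, (2^(5-1)*3^(1+1))%nat. split; [simpl; lia|split; [simpl; lia|split]].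
    - apply goodint_gen; simpl; lia.
    - unfold ck. simpl. lra. }
  destruct (Nat.eq_dec k 6) as [->|H6].
  { exists (2^6*3^2)%nat, (2^(6-1)*3^(2+1))%nat. split; [simpl; lia|split; [simpl; lia|split]].
    - apply goodint_gen; simpl; lia.
    - unfold ck. simpl. lra. }
  destruct (exists_i0 k ltac:(lia)) as [i0 [I1 [I2 I3]]].
  exists (2^k*3^i0)%nat, (2^(k-1)*3^(i0+1))%nat.
  pose proof (pow2_pos k). pose proof (pow2_pos (k-1)). pose proof (pow_pos' 3 i0 ltac:(lia)).
  pose proof (pow_pos' 3 (i0+1) ltac:(lia)).
  split; [nia|split; [nia|split]].
  - apply goodint_gen; auto. lia.
  - apply dens_gen; auto. lia.
Qed.

Theorem theorem1 :
  exists C : R, forall (k n : nat) (A : list nat),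
    (3 <= k)%nat -> (2 ^ (k - 1) <= n)%nat ->
    NoDup A -> (forall m, In m A -> (1 <= m <= n)%nat) ->
    ~ contains_kGP k A ->
    INR n - INR (length A) >= ck k * INR n - C * (ln (INR n) / INR k).
Proof.
  exists 30. intros k n A Hk Hn HA HAn Hc.
  destruct (dens_exists k Hk) as [a [b [Ha [Hb [Hg Hd]]]]].
  pose proof (main_nat k n A a b Hk HA HAn Hc Hg Ha Hb) as Hm.
  apply le_INR in Hm. rewrite !plus_INR in Hm.
  pose proof (Ylist_bound k Hk n n (Nat.le_refl n)) as HY.
  pose proof (Wlist_bound n a b Ha Hb) as HW.
  pose proof (ln_bound k n Hk Hn) as HL.
  assert (Hk' : 3 <= INR k) by (replace 3 with (INR 3) by (simpl; ring); apply le_INR; lia).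
  assert (Ha' : 1 <= INR a) by (apply (le_INR 1); auto).
  assert (Hb' : 1 <= INR b) by (apply (le_INR 1); auto).
  set (L := ln (INR n) / INR k) in *.
  assert (E1 : 4 * ln (INR n) / INR k = 4 * L) by (unfold L; field; lra).
  rewrite E1 in HY.
  assert (E2 : INR n / INR a - INR n / INR b = INR n * (1/INR a - 1/INR b)) by (field; lra).
  rewrite E2 in HW.
  assert (P8 : 8 <= 2^k).
  { replace 8 with (2^3) by (simpl; ring). apply Rle_pow; lra || lia. }
  assert (E3 : INR n / (2^k-1) = INR n * (1/(2^k-1))) by (field; lra).
  rewrite E3 in HY.
  pose proof (pos_INR n) as Hn0.
  assert (INR n * (ck k - 1/(2^k-1)) <= INR n * ((1/INR a - 1/INR b)/3)).
  { apply Rmult_le_compat_l; auto. }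
  nra.
Qed.
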